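(* Let $A$ be a finite set with $|A|\ge 2$ and $n\ge 2$. If $X\subset\mathrm{Sym}(A^n)$ is a set of $n$ instructions which generates $\mathrm{Sym}(A^n)$, then $X$ contains no unary instruction.
   Context: Any $f\in\mathrm{Sym}(A^n)$ is written $f(x)=(f_1(x),\ldots,f_n(x))$ with coordinate functions $f_i:A^n\to A$; the $i$-th coordinate function is trivial if $f_i(x)=x_i$ for all $x$. An instruction is a permutation of $A^n$ with at most one nontrivial coordinate function (the identity counts as an instruction). A unary instruction is an instruction all of whose coordinate functions depend on at most one variable, i.e. it has the form $x\mapsto(x_1,\ldots,x_{j-1},h(x_j),x_{j+1},\ldots,x_n)$ with $h\in\mathrm{Sym}(A)$. *)

(* Defs.v *)
From mathcomp Require Import all_boot all_fingroup.
Set Implicit Arguments. Unset Strict Implicit. Unset Printing Implicit Defensive.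

(* A^n is represented as {ffun 'I_n -> A}; Sym(A^n) is {perm {ffun 'I_n -> A}}. *)
Notation word A n := {ffun 'I_n -> A}.

Definition coord_trivial (A : finType) (n : nat) (f : {perm word A n}) (i : 'I_n) :=
  forall x : word A n, f x i = x i.

Definition instruction (A : finType) (n : nat) (f : {perm word A n}) :=
  exists j : 'I_n, forall i : 'I_n, i != j -> coord_trivial f i.

Definition unary_instruction (A : finType) (n : nat) (f : {perm word A n}) :=
  exists (j : 'I_n) (h : {perm A}),
    forall x : word A n, f x = [ffun i => if i == j then h (x j) else x i].

(* Main.v *)
Require Import Defs.
From mathcomp Require Import all_boot all_fingroup.
Set Implicit Arguments. Unset Strict Implicit. Unset Printing Implicit Defensive.

Section S.
Variables (A : finType) (n : nat).
Local Notation W := {ffun 'I_n -> A}.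

Definition Tset (j : 'I_n) : {set {perm W}} :=
  [set g : {perm W} | [exists phi : {ffun A -> A}, [forall x : W, g x j == phi (x j)]]].

Lemma Tset_group j : group_set (Tset j).
Proof.
apply/group_setP; split.
  rewrite inE; apply/existsP; exists [ffun a => a]; apply/forallP=> x.
  by rewrite perm1 ffunE.
move=> g h; rewrite !inE => /existsP[p1 /forallP H1] /existsP[p2 /forallP H2].
apply/existsP; exists [ffun a => p2 (p1 a)]; apply/forallP=> x.
rewrite permM ffunE (eqP (H2 _)) (eqP (H1 _)) //.
Qed.

Canonical Tgroup j := Group (Tset_group j).

Lemma not_all_T (j : 'I_n) : 1 < #|A| -> 1 < n -> ~ (forall g : {perm W}, g \in Tset j).
Proof.
move=> hA hn H.
have [a [b ab]] : exists a b : A, a != b.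
  case/card_gt1P: hA => a [b [_ _ ab]]; by exists a, b.
have [k kj] : exists k : 'I_n, k != j.
  case: (posnP j) => hj.
    exists (Ordinal hn); apply/negP=> /eqP/(congr1 val) /=; by rewrite hj.
  have h0 : 0 < n by apply: leq_ltn_trans (ltn_ord j).
  exists (Ordinal h0); apply/negP=> /eqP/(congr1 val) /= h; by rewrite -h in hj.
pose x : W := [ffun _ => a].
pose y : W := [ffun i => if i == k then b else a].
pose z : W := [ffun i => if i == j then b else a].
have xy : x != y.
  apply/negP=> /eqP/(congr1 (fun f : W => f k)); rewrite !ffunE eqxx => e.
  by rewrite e eqxx in ab.
have xz : x != z.
  apply/negP=> /eqP/(congr1 (fun f : W => f j)); rewrite !ffunE eqxx => e.
  by rewrite e eqxx in ab.
move: (H (tperm y z)); rewrite inE => /existsP[phi /forallP P].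
move: (P x) (P y); rewrite tpermL tpermD; last 2 first.
- by rewrite eq_sym.
- by rewrite eq_sym.
rewrite !ffunE eqxx (eq_sym j k) (negbTE kj) => /eqP <- /eqP e.
by rewrite e eqxx in ab.
Qed.

End S.

Theorem lemma6 (A : finType) (n : nat) (X : {set {perm {ffun 'I_n -> A}}}) :
  1 < #|A| -> 1 < n ->
  #|X| = n ->
  (forall f, f \in X -> instruction f) ->
  <<X>>%g = [set: {perm {ffun 'I_n -> A}}] ->
  forall f, f \in X -> ~ unary_instruction f.
Proof.
move=> hA hn cX hI hG f fX [j0 [h hf]].
have genT : forall j, X \subset @Tset A n j -> False.
  move=> j sub; apply: (not_all_T hA hn (j := j)) => g.
  have : <<X>>%g \subset @Tgroup A n j by rewrite gen_subG.
  by rewrite hG => /subsetP; apply; rewrite inE.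
pose nt (g : {perm {ffun 'I_n -> A}}) i := [exists x, g x i != x i].
have exG : forall i, exists2 g, g \in X & nt g i.
  move=> i; apply/exists_inP; apply/negP => /exists_inP Hn.
  apply: (genT i); apply/subsetP => g gX; rewrite inE.
  apply/existsP; exists [ffun a => a]; apply/forallP => x; rewrite ffunE.
  apply/negPn/negP => hx; apply: Hn; exists g => //; apply/existsP; by exists x.
have ntw : forall g i k, g \in X -> nt g i -> k != i -> forall x, g x k = x k.
  move=> g i k gX /existsP[x0 hx0] ki x.
  case: (hI g gX) => j Hj.
  have ij : i == j.
    apply/negPn/negP => ij; move: hx0; by rewrite Hj ?eqxx.
  apply: Hj; by rewrite -(eqP ij).
pose G i := odflt (1%g : {perm {ffun 'I_n -> A}}) [pick g in X | nt g i].
have GP : forall i, G i \in X /\ nt (G i) i.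
  move=> i; rewrite /G; case: pickP => [g /andP[]| H] //=.
  case: (exG i) => g gX ng; by move: (H g); rewrite gX ng.
have Ginj : injective G.
  move=> i k e; apply/eqP/negPn/negP => ik.
  case: (GP i) => Xi /existsP[x hx].
  case: (GP k) => _ nk.
  by move: hx; rewrite e (ntw _ _ _ _ nk ik) ?eqxx; case: (GP k).
have imX : [set G i | i : 'I_n] = X.
  apply/eqP; rewrite eqEcard; apply/andP; split.
    apply/subsetP => g /imsetP[i0 _ ->]; by case: (GP i0).
  by rewrite card_imset // card_ord cX.
apply: (genT j0); apply/subsetP => g gX; rewrite inE.
have [-> | gf] := eqVneq g f.
  apply/existsP; exists [ffun a => h a]; apply/forallP => x.
  by rewrite hf !ffunE eqxx.
apply/existsP; exists [ffun a => a]; apply/forallP => x; rewrite ffunE.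
move: gX; rewrite -imX => /imsetP[i _ gi].
move: fX; rewrite -imX => /imsetP[k _ fk].
have [ij | ij] := eqVneq i j0.
  have kj : k = j0.
    apply/eqP/negPn/negP => kj.
    case: (GP k) => _ /existsP[y]; by rewrite -fk hf ffunE (negbTE kj) eqxx.
  by move: gf; rewrite gi fk ij kj eqxx.
case: (GP i) => Xi ni.
by rewrite gi (ntw _ _ _ Xi ni) // eq_sym.
Qed.
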